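(* Let $X$ and $Y$ be real Banach spaces such that $(\mathcal F(X),Y)$ has the Bishop-Phelps-Bollob\'as property for compact operators witnessed by a function $\varepsilon\mapsto\eta(\varepsilon)$. Let $0<\varepsilon<1$, $f\in\mathrm{Lip}_{0\mathcal K}(X,Y)$ with $\|f\|=1$, and $(x,y)\in\widetilde X$ with $\frac{\|f(x)-f(y)\|}{\|x-y\|}>1-\eta(\varepsilon)$. Then for every $h\in\mathrm{Lip}_0(X,Y)$ with $\|h\|=1$ and $\frac{\|h(x)-h(y)\|}{\|x-y\|}=1$, there exist $g\in\mathrm{Lip}_{0\mathcal K}(X,Y)$ with $\|g\|=1$, $z\in S_Y$ and a sequence $(v_n,w_n)\in\widetilde X$ such that $\|g-f\|<\varepsilon$, $\frac{\|h(v_n)-h(w_n)\|}{\|v_n-w_n\|}>1-\varepsilon$ for every $n$, and $\frac{g(v_n)-g(w_n)}{\|v_n-w_n\|}\to z$.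
   Context: $\widetilde X=\{(x,y)\in X^2:x\neq y\}$. $\mathrm{Lip}_0(X,Y)$ is the Banach space of Lipschitz $f\colon X\to Y$ with $f(0)=0$ and norm $\|f\|=\sup_{(x,y)\in\widetilde X}\|f(x)-f(y)\|/\|x-y\|$; $\mathrm{Lip}_{0\mathcal K}(X,Y)$ is the subspace of those $f$ whose set of slopes $\{\frac{f(x)-f(y)}{\|x-y\|}:(x,y)\in\widetilde X\}$ is relatively compact. $\mathcal F(X)$ is the closed span of $\{\delta_x:x\in X\}$ in $\mathrm{Lip}_0(X,\mathbb R)^*$, $\delta_x(g)=g(x)$. A pair $(Z,Y)$ has the BPBp for compact operators witnessed by a function $\eta\colon(0,1)\to(0,\infty)$ if for every $\varepsilon\in(0,1)$, whenever $T\colon Z\to Y$ is compact linear with $\|T\|=1$ and $w\in S_Z$ satisfies $\|Tw\|>1-\eta(\varepsilon)$, there exist compact linear $S\colon Z\to Y$ with $\|S\|=1$ and $v\in S_Z$ with $\|Sv\|=1$, $\|S-T\|<\varepsilon$, $\|v-w\|<\varepsilon$. *)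

(* Defs.v *)
From HB Require Import structures.
From mathcomp Require Import all_boot all_order all_algebra.
From mathcomp Require Import all_classical all_reals all_analysis.
From mathcomp Require Import Rstruct Rstruct_topology.
From Stdlib Require Import Rdefinitions.
Set Implicit Arguments. Unset Strict Implicit. Unset Printing Implicit Defensive.
Import Order.TTheory GRing.Theory Num.Theory.
Import numFieldNormedType.Exports.
Local Open Scope classical_set_scope.
Local Open Scope ring_scope.

Notation RR := Rdefinitions.R.

Section LipDefs.
Variables (X Y : normedModType RR).

Definition slope (f : X -> Y) (x y : X) : Y := (`|x - y|)^-1 *: (f x - f y).

Definition isLip0 (f : X -> Y) : Prop :=
  f 0 = 0 /\ exists k : RR, forall x y : X, `|f x - f y| <= k * `|x - y|.

Definition lipnorm (f : X -> Y) : RR :=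
  sup [set `|f p.1 - f p.2| / `|p.1 - p.2| | p in [set p : X * X | p.1 != p.2]].

Definition isLip0K (f : X -> Y) : Prop :=
  isLip0 f /\
  compact (closure [set slope f p.1 p.2 | p in [set p : X * X | p.1 != p.2]]).
End LipDefs.

Section FreeSpace.
Variable X : normedModType RR.

(* Elements of Lip_0(X,R)^* are represented as functions phi : (X -> R) -> R,
   normalized to vanish on non-Lip_0 functions. *)
Definition deltas_comb (s : seq (RR * X)) (g : X -> RR^o) : RR :=
  \sum_(p <- s) p.1 * g p.2.

(* F(X): closure (in the dual norm of Lip_0(X,R)) of span {delta_x : x in X} *)
Definition Free : set ((X -> RR^o) -> RR) :=
  [set phi | (forall g : X -> RR^o, ~ isLip0 g -> phi g = 0) /\
     forall e : RR, 0 < e -> exists s : seq (RR * X),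
       forall g : X -> RR^o, isLip0 g -> `|phi g - deltas_comb s g| <= e * lipnorm g].

Definition freenorm (phi : (X -> RR^o) -> RR) : RR :=
  sup [set `|phi g| | g in [set g : X -> RR^o | isLip0 g /\ lipnorm g <= 1]].

Definition fsub (phi psi : (X -> RR^o) -> RR) : (X -> RR^o) -> RR :=
  fun g => phi g - psi g.

Variable Y : normedModType RR.

(* operators F(X) -> Y (only their values on Free matter) *)
Definition is_linear_on_Free (T : ((X -> RR^o) -> RR) -> Y) : Prop :=
  forall (a : RR) phi psi, Free phi -> Free psi ->
    T (fun g => a * phi g + psi g) = a *: T phi + T psi.

Definition Free_ball : set ((X -> RR^o) -> RR) :=
  [set phi | Free phi /\ freenorm phi <= 1].

Definition is_compact_op (T : ((X -> RR^o) -> RR) -> Y) : Prop :=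
  is_linear_on_Free T /\ compact (closure (T @` Free_ball)).

Definition opnorm (T : ((X -> RR^o) -> RR) -> Y) : RR :=
  sup [set `|T phi| | phi in Free_ball].

Definition BPBp_compact (eta : RR -> RR) : Prop :=
  forall eps : RR, 0 < eps < 1 ->
  forall T : ((X -> RR^o) -> RR) -> Y, is_compact_op T -> opnorm T = 1 ->
  forall w, Free w -> freenorm w = 1 -> `|T w| > 1 - eta eps ->
  exists (S : ((X -> RR^o) -> RR) -> Y) (v : (X -> RR^o) -> RR),
    is_compact_op S /\ opnorm S = 1 /\ Free v /\ freenorm v = 1 /\ `|S v| = 1 /\
    opnorm (fun phi => S phi - T phi) < eps /\ freenorm (fsub v w) < eps.
End FreeSpace.

(* Main.v *)
Require Import Defs.
From mathcomp Require Import all_boot all_order all_algebra.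
From mathcomp Require Import all_classical all_reals all_analysis.
From mathcomp Require Import Rstruct Rstruct_topology.
From mathcomp Require Import finmap.
From mathcomp Require Import ring lra.
Import Order.TTheory GRing.Theory Num.Theory.
Import numFieldNormedType.Exports.
Local Open Scope classical_set_scope.
Local Open Scope ring_scope.
Set Implicit Arguments. Unset Strict Implicit. Unset Printing Implicit Defensive.

Section FinHB.
Variable R : realType.
Variable Q : (nat -> R) -> R.
Hypothesis QD : forall b1 b2, Q (fun i => b1 i + b2 i) <= Q b1 + Q b2.
Hypothesis QZ : forall t b, 0 <= t -> Q (fun i => t * b i) = t * Q b.

Definition trunc (k : nat) (b : nat -> R) := fun i => if (i < k)%N then b i else 0.
Definition ell (k : nat) (c b : nat -> R) := \sum_(i < k) c i * b i.
Definition valid k c := forall b, ell k c b <= Q (trunc k b).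

Lemma ellD k c b1 b2 : ell k c (fun i => b1 i + b2 i) = ell k c b1 + ell k c b2.
Proof. by rewrite /ell -big_split /=; apply: eq_bigr => i _; rewrite mulrDr. Qed.

Lemma ellZ k c t b : ell k c (fun i => t * b i) = t * ell k c b.
Proof. by rewrite /ell mulr_sumr; apply: eq_bigr => i _; rewrite mulrCA. Qed.

Lemma Q0 : Q (fun=> 0) = 0.
Proof.
transitivity (Q (fun i => 0 * (fun=> 0 : R) i)); first by congr Q; apply: funext => i; rewrite mul0r.
by rewrite QZ // mul0r.
Qed.

Lemma step k c : valid k c -> exists d, valid k.+1 (fun i => if i == k then d else c i).
Proof.
move=> hv.
pose eK : nat -> R := fun i => if i == k then 1 else 0.
pose A := [set r | exists m, r = ell k c m - Q (fun i => trunc k m i - eK i)].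
pose B m := Q (fun i => trunc k m i + eK i) - ell k c m.
have AB : forall r m', A r -> r <= B m'.
  move=> r m' [m ->]; rewrite /B.
  suff : ell k c m + ell k c m' <= Q (fun i => trunc k m i - eK i) + Q (fun i => trunc k m' i + eK i) by lra.
  rewrite -ellD; apply: le_trans (hv _) _; apply: le_trans (QD _ _); rewrite le_eqVlt; apply/orP; left; apply/eqP.
  congr Q; apply: funext => i; rewrite /trunc; case: ifP => _; lra.
have hA : has_sup A.
  split; first by exists (ell k c (fun=> 0) - Q (fun i => trunc k (fun=> 0) i - eK i)); exists (fun=> 0).
  by exists (B (fun=> 0)) => r Ar; apply: AB.
exists (sup A) => b.
have ellE : ell k.+1 (fun i => if i == k then sup A else c i) b = ell k c b + sup A * b k.
  rewrite /ell big_ord_recr /= eqxx; congr (_ + _); apply: eq_bigr => i _.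
  by rewrite (ltn_eqF (ltn_ord i)).
rewrite ellE.
have trE : trunc k.+1 b = fun i => trunc k b i + b k * eK i.
  apply: funext => i; rewrite /trunc /eK ltnS leq_eqVlt.
  case: (eqVneq i k) => [->|ik] /=; first by rewrite ltnn mulr1 add0r.
  by rewrite mulr0 addr0.
rewrite trE.
have [t0|t0|t0] := ltgtP (b k) 0.
- pose s := - b k.
  have s0 : 0 < s by rewrite /s; lra.
  pose m := fun i => s^-1 * b i.
  have -> : (fun i => trunc k b i + b k * eK i) = (fun i => s * (trunc k m i - eK i)).
    apply: funext => i; rewrite /trunc /m; case: ifP => _; rewrite /s; field; lra.
  rewrite QZ; last by lra.
  have Am : A (ell k c m - Q (fun i => trunc k m i - eK i)) by exists m.
  have := sup_upper_bound hA Am.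
  have -> : ell k c b = s * ell k c m by rewrite /m ellZ mulrA mulfV ?mul1r //; lra.
  rewrite /s; nra.
- pose m := fun i => (b k)^-1 * b i.
  have -> : (fun i => trunc k b i + b k * eK i) = (fun i => b k * (trunc k m i + eK i)).
    apply: funext => i; rewrite /trunc /m; case: ifP => _; field; lra.
  rewrite QZ; last by lra.
  have : sup A <= B m by apply: ge_sup; [case: hA|] => // r Ar; apply: AB.
  have -> : ell k c b = b k * ell k c m by rewrite /m ellZ mulrA mulfV ?mul1r //; lra.
  rewrite /B; nra.
- rewrite t0 mulr0 addr0; apply: le_trans (hv b) _; rewrite le_eqVlt; apply/orP; left; apply/eqP.
  by congr Q; apply: funext => i; rewrite mul0r addr0.
Qed.

End FinHB.

Section FinHB2.
Variable R : realType.
Variable q : (nat -> R) -> R.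
Variable n : nat.
Hypothesis qD : forall b1 b2, q (fun i => b1 i + b2 i) <= q b1 + q b2.
Hypothesis qZ : forall t b, 0 <= t -> q (fun i => t * b i) = t * q b.
Hypothesis qloc : forall b b', (forall i, (i < n)%N -> b i = b' i) -> q b = q b'.

Lemma finHB (a : nat -> R) : exists l : nat -> R,
  (forall b : nat -> R, \sum_(i < n) l i * b i <= q b) /\ \sum_(i < n) l i * a i = q a.
Proof.
pose Q := fun be : nat -> R => q (fun i => be 0%N * a i + be i.+1).
have QD : forall b1 b2, Q (fun i => b1 i + b2 i) <= Q b1 + Q b2.
  move=> b1 b2; rewrite /Q; apply: le_trans (qD _ _); rewrite le_eqVlt; apply/orP; left; apply/eqP.
  congr q; apply: funext => i /=; rewrite mulrDl; lra.
have QZ : forall t b, 0 <= t -> Q (fun i => t * b i) = t * Q b.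
  move=> t b t0; rewrite /Q -qZ //; congr q; apply: funext => i /=; rewrite mulrDr mulrA.
  by [].
have q0 : q (fun=> 0) = 0 by have := Q0 qZ.
have base : valid Q 1 (fun=> q a).
  move=> b; rewrite /ell big_ord1 /Q /trunc /=.
  have -> : (fun i => b 0%N * a i + (if (i.+1 < 1)%N then b i.+1 else 0)) = (fun i => b 0%N * a i).
    by apply: funext => i; rewrite addr0.
  have [b0|b0] := leP 0 (b 0%N).
    by rewrite qZ // mulrC.
  have -> : (fun i => b 0%N * a i) = (fun i => (- b 0%N) * (- a i)) by apply: funext => i; rewrite mulrNN.
  rewrite qZ; last by lra.
  have : 0 <= q a + q (fun i => - a i).
    rewrite -q0; apply: le_trans (qD _ _); rewrite le_eqVlt; apply/orP; left; apply/eqP.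
    by congr q; apply: funext => i; rewrite subrr.
  nra.
have ind : forall k, exists c, c 0%N = q a /\ valid Q k.+1 c.
  elim=> [|k [c [c0 hv]]]; first by exists (fun=> q a).
  have [d hd] := step QD QZ hv.
  by exists (fun i => if i == k.+1 then d else c i); split.
have [c [c0 hv]] := ind n.
exists (fun i => c i.+1).
have key : forall b0 (b : nat -> R), c 0%N * b0 + \sum_(i < n) c i.+1 * b i <= q (fun i => b0 * a i + (if (i < n)%N then b i else 0)).
  move=> b0 b; have := hv (fun i => if i is j.+1 then b j else b0).
  by rewrite /ell big_ord_recl /= /Q /trunc /=; under eq_bigr do rewrite /bump /=.
split.
  move=> b; have := key 0 b; rewrite mulr0 add0r => /le_trans; apply.
  rewrite le_eqVlt; apply/orP; left; apply/eqP; apply: qloc => i ilt; rewrite ilt; lra.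
have k1 := key (-1) a.
have k2 := key 1 (fun i => - a i).
have e1 : q (fun i => -1 * a i + (if (i < n)%N then a i else 0)) = 0.
  rewrite -q0; apply: qloc => i ilt; rewrite ilt; lra.
have e2 : q (fun i => 1 * a i + (if (i < n)%N then - a i else 0)) = 0.
  rewrite -q0; apply: qloc => i ilt; rewrite ilt; lra.
rewrite e1 in k1; rewrite e2 in k2.
have : \sum_(i < n) c i.+1 * - a i = - \sum_(i < n) c i.+1 * a i.
  by rewrite -sumrN; apply: eq_bigr => i _; rewrite mulrN.
move=> s; rewrite s in k2; lra.
Qed.
End FinHB2.

Lemma le_eps (a b : RR) : (forall e, 0 < e -> a <= b + e) -> a <= b.
Proof. by move=> h; apply/ler_addgt0Pr. Qed.

Section LipBasics.
Variables (X Y : normedModType RR).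
Implicit Types f : X -> Y.

Definition lipset f := [set `|f p.1 - f p.2| / `|p.1 - p.2| | p in [set p : X * X | p.1 != p.2]].

Lemma lipnorm_ge0 f : 0 <= lipnorm f.
Proof.
rewrite /lipnorm; set E := [set _ | _ in _].
have [hs|hs] := pselect (has_sup E); last by rewrite sup_out.
case: (hs) => [[r Er]] _; apply: le_trans (sup_upper_bound hs Er).
by case: Er => p _ <-; rewrite divr_ge0.
Qed.

Lemma lip_has_sup f k : (forall p q, `|f p - f q| <= k * `|p - q|) -> forall p q : X, p != q ->
  has_sup (lipset f).
Proof.
move=> hk p q pq; split; first by exists (`|f p - f q| / `|p - q|); exists (p, q).
exists k => r [[a b] /= ab <-].
have ab0 : 0 < `|a - b| by rewrite normr_gt0 subr_eq0.
by rewrite ler_pdivrMr.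
Qed.

Lemma lip_slope_le f k : (forall p q, `|f p - f q| <= k * `|p - q|) -> forall p q : X, p != q ->
  `|f p - f q| / `|p - q| <= lipnorm f.
Proof.
move=> hk p q pq; apply: (sup_upper_bound (lip_has_sup hk pq)).
by exists (p, q).
Qed.

Lemma lipnorm_le f c : 0 <= c -> (forall p q, `|f p - f q| <= c * `|p - q|) -> lipnorm f <= c.
Proof.
move=> c0 hc; change (sup (lipset f) <= c).
have [[r Er]|ne] := pselect ((lipset f) !=set0); last first.
  have -> : lipset f = set0.
    by apply/seteqP; split => r Er //; exfalso; apply: ne; exists r.
  by rewrite sup0.
apply: ge_sup; first by exists r.
move=> z [[a b] /= ab <-].
have ab0 : 0 < `|a - b| by rewrite normr_gt0 subr_eq0.
by rewrite ler_pdivrMr.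
Qed.

Lemma isLip0_bound f : isLip0 f -> forall p q, `|f p - f q| <= lipnorm f * `|p - q|.
Proof.
move=> [_ [k hk]] p q.
have [->|pq] := eqVneq p q; first by rewrite !subrr !normr0 mulr0.
have := lip_slope_le hk pq.
have ab0 : 0 < `|p - q| by rewrite normr_gt0 subr_eq0.
by rewrite ler_pdivrMr.
Qed.

Lemma lipnorm_slope_le f : isLip0 f -> forall p q, p != q -> `|slope f p q| <= lipnorm f.
Proof.
move=> hf p q pq; rewrite /slope normrZ normrV ?unitfE ?normr_eq0 ?subr_eq0 // normr_id mulrC.
have ab0 : 0 < `|p - q| by rewrite normr_gt0 subr_eq0.
by rewrite ler_pdivrMr // isLip0_bound.
Qed.

End LipBasics.

Section MD.
Variable X : normedModType RR.

Definition combF (V : normedModType RR) (F : X -> V) (s : seq (RR * X)) : V :=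
  \sum_(p <- s) p.1 *: F p.2.
Definition molF (V : normedModType RR) (F : X -> V) (t : seq (RR * (X * X))) : V :=
  \sum_(u <- t) u.1 *: slope F u.2.1 u.2.2.
Definition cost (t : seq (RR * (X * X))) : RR := \sum_(u <- t) `|u.1|.
Definition good (t : seq (RR * (X * X))) := forall u, u \in t -> u.2.1 != u.2.2.

Lemma cost_ge0 t : 0 <= cost t.
Proof. by apply: sumr_ge0 => u _. Qed.

Variable s : seq (RR * X).
Let n := size s.
Let xs i := (nth (0, 0) s i).2.
Let as_ i := (nth (0, 0) s i).1.

Definition reps (c : nat -> RR) t := good t /\
  forall (V : normedModType RR) (F : X -> V), F 0 = 0 -> \sum_(i < n) c i *: F (xs i) = molF F t.
Definition costs c := [set r | exists t, reps c t /\ r = cost t].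
Definition qg c := inf (costs c).

Lemma reps_ex c : exists t, reps c t.
Proof.
exists (map (fun i : 'I_n => (c i * `|xs i|, (xs i, 0))) (seq.filter (fun i : 'I_n => xs i != 0) (enum 'I_n))); split.
  by move=> u /mapP [i]; rewrite mem_filter => /andP [h _] -> /=.
move=> V F F0; rewrite /molF big_map big_filter big_enum_cond /= [RHS]big_mkcond /=.
apply: eq_bigr => i _; case: eqP => [->|/eqP xi0] /=; first by rewrite F0 scaler0.
rewrite /slope subr0 F0 subr0 scalerA -mulrA mulfV ?mulr1 // normr_eq0 //.
Qed.

Lemma costs_inf c : has_inf (costs c).
Proof.
split; first by have [t ht] := reps_ex c; exists (cost t); exists t.
by exists 0 => r [t [_ ->]]; apply: cost_ge0.
Qed.

Lemma qg_ge0 c : 0 <= qg c.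
Proof.
apply: lb_le_inf; first by case: (costs_inf c).
by move=> r [t [_ ->]]; apply: cost_ge0.
Qed.

Lemma qg_le c t : reps c t -> qg c <= cost t.
Proof. by move=> h; apply: (ge_inf (costs_inf c).2); exists t. Qed.

Lemma qg_adh c e : 0 < e -> exists t, reps c t /\ cost t < qg c + e.
Proof.
move=> e0; have [r [t [ht ->]] lt] := inf_adherent e0 (costs_inf c).
by exists t.
Qed.

Lemma reps_add c1 c2 t1 t2 : reps c1 t1 -> reps c2 t2 -> reps (fun i => c1 i + c2 i) (t1 ++ t2).
Proof.
move=> [g1 h1] [g2 h2]; split.
  by move=> u; rewrite mem_cat => /orP [/g1|/g2].
move=> V F F0.
have -> : molF F (t1 ++ t2) = molF F t1 + molF F t2 by rewrite /molF big_cat.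
rewrite -h1 // -h2 // -big_split /=.
by apply: eq_bigr => i _; rewrite scalerDl.
Qed.

Lemma reps_scale a c t : reps c t ->
  reps (fun i => a * c i) [seq (a * u.1, u.2) | u <- t].
Proof.
move=> [g h]; split.
  by move=> u /mapP [u0 /g hu ->].
move=> V F F0; rewrite /molF big_map /=.
have := h V F F0; rewrite /molF => h'.
transitivity (a *: \sum_(i < n) c i *: F (xs i)).
  by rewrite scaler_sumr; apply: eq_bigr => i _; rewrite scalerA.
by rewrite h' scaler_sumr; apply: eq_bigr => i _; rewrite scalerA.
Qed.

Lemma cost_scale a t : cost [seq (a * u.1, u.2) | u <- t] = `|a| * cost t.
Proof. by rewrite /cost big_map mulr_sumr; apply: eq_bigr => u _; rewrite normrM. Qed.

Lemma qD c1 c2 : qg (fun i => c1 i + c2 i) <= qg c1 + qg c2.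
Proof.
apply: le_eps => e e0.
have e20 : 0 < e / 2 by rewrite divr_gt0.
have [t1 [r1 l1]] := qg_adh c1 e20.
have [t2 [r2 l2]] := qg_adh c2 e20.
apply: le_trans (qg_le (reps_add r1 r2)) _.
rewrite /cost big_cat /=; rewrite -/(cost t1) -/(cost t2); lra.
Qed.

Lemma qZle c a : 0 < a -> qg (fun i => a * c i) <= a * qg c.
Proof.
move=> a0; apply: le_eps => e e0.
have ea0 : 0 < e / a by rewrite divr_gt0.
have [t [r l]] := qg_adh c ea0.
apply: le_trans (qg_le (reps_scale a r)) _.
rewrite cost_scale gtr0_norm //.
have : a * cost t <= a * (qg c + e / a) by rewrite ler_pM2l // ltW.
by rewrite mulrDr mulrCA mulfV ?mulr1 // ?gt_eqF //.
Qed.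

Lemma qZ a c : 0 <= a -> qg (fun i => a * c i) = a * qg c.
Proof.
rewrite le_eqVlt => /orP [/eqP <-|a0].
  rewrite mul0r; apply/eqP; rewrite eq_le qg_ge0 andbT.
  have : reps (fun i => 0 * c i) [::].
    split; first by [].
    by move=> V F F0; rewrite /molF big_nil; apply: big1 => i _; rewrite mul0r scale0r.
  by move/qg_le; rewrite /cost big_nil.
apply/eqP; rewrite eq_le qZle //=.
have ai0 : 0 < a^-1 by rewrite invr_gt0.
have := @qZle (fun i => a * c i) a^-1 ai0.
have -> : (fun i => a^-1 * (a * c i)) = c by apply: funext => i; rewrite mulKf ?gt_eqF.
move=> h; rewrite -(ler_pM2l ai0) mulKf ?gt_eqF //.
Qed.

Lemma qloc b b' : (forall i, (i < n)%N -> b i = b' i) -> qg b = qg b'.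
Proof.
move=> hb; rewrite /qg; congr inf; apply/seteqP; split => r [t [[g h] ->]]; exists t; split => //; split => // V F F0;
  rewrite -h //; apply: eq_bigr => i _; rewrite hb //.
Qed.

Lemma qpair (b : nat -> RR) (p q : X) : (forall (V : normedModType RR) (F : X -> V), F 0 = 0 ->
   \sum_(i < n) b i *: F (xs i) = F p - F q) -> qg b <= `|p - q|.
Proof.
have [<-|pq] := eqVneq p q => hb.
  have : reps b [::] by split => // V F F0; rewrite hb // subrr /molF big_nil.
  by move/qg_le; rewrite /cost big_nil subrr normr0.
have : reps b [:: (`|p - q|, (p, q))].
  split; first by move=> u; rewrite mem_seq1 => /eqP -> /=.
  move=> V F F0; rewrite hb // /molF big_seq1 /= /slope scalerA mulfV ?scale1r //.
  by rewrite normr_eq0 subr_eq0.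
by move/qg_le; rewrite /cost big_seq1 /= normr_id.
Qed.

Definition ei (i : nat) : nat -> RR := fun k => if k == i then 1 else 0.

Lemma sum_eiV (V : normedModType RR) (G : nat -> V) i : (i < n)%N ->
  \sum_(k < n) ei i k *: G k = G i.
Proof.
move=> ilt; rewrite (bigD1 (Ordinal ilt)) //= /ei eqxx scale1r big1 ?addr0 //.
move=> k; rewrite -val_eqE /= => /negbTE ->; by rewrite scale0r.
Qed.

Lemma sum_eiR (G : nat -> RR) i : (i < n)%N -> \sum_(k < n) G k * ei i k = G i.
Proof.
move=> ilt; rewrite (bigD1 (Ordinal ilt)) //= /ei eqxx mulr1 big1 ?addr0 //.
move=> k; rewrite -val_eqE /= => /negbTE ->; by rewrite mulr0.
Qed.


Lemma HBl : exists l : nat -> RR, (forall b : nat -> RR, \sum_(i < n) l i * b i <= qg b) /\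
   \sum_(i < n) l i * as_ i = qg as_.
Proof. exact: (finHB qD qZ qloc as_). Qed.

Section Phi.
Variable l : nat -> RR.
Hypothesis hl1 : forall b : nat -> RR, \sum_(i < n) l i * b i <= qg b.

Lemma l_diff i j : (i < n)%N -> (j < n)%N -> l i - l j <= `|xs i - xs j|.
Proof.
move=> il jl; have := hl1 (fun k => ei i k - ei j k).
have -> : \sum_(k < n) l k * (ei i k - ei j k) = l i - l j.
  by rewrite -(sum_eiR l il) -(sum_eiR l jl) -sumrB; apply: eq_bigr => k _; rewrite mulrBr.
move/le_trans; apply; apply: qpair => V F F0.
rewrite -(sum_eiV (fun k => F (xs k)) il) -(sum_eiV (fun k => F (xs k)) jl) -sumrB.
by apply: eq_bigr => k _; rewrite scalerBl.
Qed.

Lemma l_up i : (i < n)%N -> l i <= `|xs i|.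
Proof.
move=> il; have := hl1 (ei i); rewrite sum_eiR // => /le_trans; apply.
have -> : `|xs i| = `|xs i - 0| by rewrite subr0.
apply: qpair => V F F0.
by rewrite F0 subr0 (sum_eiV (fun k => F (xs k))).
Qed.

Lemma l_low i : (i < n)%N -> - l i <= `|xs i|.
Proof.
move=> il; have := hl1 (fun k => - ei i k).
have -> : \sum_(k < n) l k * - ei i k = - l i.
  by rewrite -(sum_eiR l il) -sumrN; apply: eq_bigr => k _; rewrite mulrN.
move/le_trans; apply.
have -> : `|xs i| = `|0 - xs i| by rewrite sub0r normrN.
apply: qpair => V F F0.
rewrite F0 sub0r -(sum_eiV (fun k => F (xs k)) il) -sumrN.
by apply: eq_bigr => k _; rewrite scaleNr.
Qed.

Definition phi (p : X) : RR := \big[Order.min/`|p|]_(i < n) (l i + `|p - xs i|).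

Lemma phi_xs i : (i < n)%N -> phi (xs i) = l i.
Proof.
move=> il; apply/eqP; rewrite eq_le; apply/andP; split.
  by apply: le_trans (bigmin_le _ (Ordinal il) _) _; rewrite /= subrr normr0 addr0.
apply: le_bigmin; first exact: l_up.
move=> k _; have := l_diff il (ltn_ord k); rewrite distrC; lra.
Qed.

Lemma phi0 : phi 0 = 0.
Proof.
apply/eqP; rewrite eq_le; apply/andP; split.
  by apply: le_trans (bigmin_le_id _ _ _ _) _; rewrite normr0.
apply: le_bigmin; first by rewrite normr0.
move=> k _; rewrite sub0r normrN; have := l_low (ltn_ord k); lra.
Qed.

Lemma phi_lip1 p q : phi p - phi q <= `|p - q|.
Proof.
suff : phi p - `|p - q| <= phi q by lra.
apply: le_bigmin.
  have : phi p <= `|p| by apply: bigmin_le_id.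
  have := ler_distD q p 0; rewrite subr0 subr0 distrC; lra.
move=> k _; have : phi p <= l k + `|p - xs k| by apply: bigmin_le.
have := ler_distD q p (xs k); rewrite distrC; lra.
Qed.

Lemma phi_lip p q : `|phi p - phi q| <= 1 * `|p - q|.
Proof.
rewrite mul1r ler_norml; have := phi_lip1 p q; have := phi_lip1 q p; rewrite distrC; lra.
Qed.

Lemma phi_Lip0 : isLip0 (phi : X -> RR^o).
Proof. split; first exact: phi0. by exists 1; apply: phi_lip. Qed.

Lemma phi_norm : lipnorm (phi : X -> RR^o) <= 1.
Proof. by apply: lipnorm_le => //; apply: phi_lip. Qed.

End Phi.

Lemma combF_nth (V : normedModType RR) (F : X -> V) : combF F s = \sum_(i < n) as_ i *: F (xs i).
Proof. by rewrite /combF (big_nth (0, 0)) big_mkord. Qed.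

Lemma deltas_nth (g : X -> RR^o) : deltas_comb s g = \sum_(i < n) as_ i * g (xs i).
Proof. by rewrite /deltas_comb (big_nth (0, 0)) big_mkord. Qed.

Lemma MD E : 0 <= E -> (forall g : X -> RR^o, isLip0 g -> `|deltas_comb s g| <= E * lipnorm g) ->
  forall e, 0 < e -> exists t, good t /\ cost t <= E + e /\
    forall (V : normedModType RR) (F : X -> V), F 0 = 0 -> combF F s = molF F t.
Proof.
move=> E0' hE e e0.
have [l [hl1 hl2]] := HBl.
have hq : qg as_ <= E.
  rewrite -hl2.
  have -> : \sum_(i < n) l i * as_ i = deltas_comb s (phi l : X -> RR^o).
    rewrite deltas_nth; apply: eq_bigr => i _; rewrite phi_xs // mulrC //.
  apply: le_trans (ler_norm _) _; apply: le_trans (hE _ (phi_Lip0 hl1)) _.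
  by rewrite ler_piMr // phi_norm.
have [t [[g h] lt]] := qg_adh as_ e0.
exists t; split => //; split; first lra.
by move=> V F F0; rewrite combF_nth h.
Qed.

End MD.

Lemma small0 (x K : RR) : 0 <= K -> (forall e, 0 < e -> `|x| <= e * K) -> x = 0.
Proof.
move=> K0 h; apply/normr0_eq0/eqP; rewrite eq_le normr_ge0 andbT; apply: le_eps => e e0; rewrite add0r.
have K1 : 0 < K + 1 by lra.
apply: le_trans (h (e / (K + 1)) (divr_gt0 e0 K1)) _.
rewrite mulrAC ler_pdivrMr // ler_pM2l //; lra.
Qed.

Lemma archi_k (e : RR) : 0 < e -> exists N, forall k, (N <= k)%N -> k.+1%:R^-1 < e.
Proof.
move=> e0; have [N _ hN] := near_infty_natSinv_lt (PosNum e0).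
by exists N => k hk; apply: hN.
Qed.

Section FreeBasics.
Variable X : normedModType RR.
Implicit Types (phi : (X -> RR^o) -> RR) (g : X -> RR^o) (s : seq (RR * X)).

Definition nc s : (X -> RR^o) -> RR := fun g => if `[< isLip0 g >] then deltas_comb s g else 0.
Definition approx phi e s := forall g, isLip0 g -> `|phi g - deltas_comb s g| <= e * lipnorm g.
Definition scales (a : RR) s := [seq (a * p.1, p.2) | p <- s].

Lemma nc_free s : Free (nc s).
Proof.
split; first by move=> g ng; rewrite /nc asboolF.
move=> e e0; exists s => g lg; rewrite /nc asboolT // subrr normr0.
by apply: mulr_ge0; [apply: ltW|apply: lipnorm_ge0].
Qed.

Lemma deltas_cat s1 s2 g : deltas_comb (s1 ++ s2) g = deltas_comb s1 g + deltas_comb s2 g.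
Proof. by rewrite /deltas_comb big_cat. Qed.

Lemma deltas_scale a s g : deltas_comb (scales a s) g = a * deltas_comb s g.
Proof. by rewrite /deltas_comb big_map mulr_sumr; apply: eq_bigr => p _; rewrite mulrA. Qed.

Lemma combF_cat (V : normedModType RR) (F : X -> V) s1 s2 : combF F (s1 ++ s2) = combF F s1 + combF F s2.
Proof. by rewrite /combF big_cat. Qed.

Lemma combF_scale (V : normedModType RR) (F : X -> V) a s : combF F (scales a s) = a *: combF F s.
Proof. by rewrite /combF big_map scaler_sumr; apply: eq_bigr => p _; rewrite scalerA. Qed.

Lemma isLip0_scale g c : isLip0 g -> isLip0 (fun p => c * g p : RR^o).
Proof.
move=> [g0 [k hk]]; split; first by rewrite g0 mulr0.
exists (`|c| * k) => p q; rewrite -mulrBr normrM -mulrA ler_wpM2l //.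
Qed.

Lemma Free_hom phi c g : Free phi -> isLip0 g -> phi (fun p => c * g p) = c * phi g.
Proof.
move=> [_ hF] lg; apply/eqP; rewrite -subr_eq0; apply/eqP.
apply: (@small0 _ (lipnorm (fun p => c * g p : RR^o) + `|c| * lipnorm g)).
  by apply: addr_ge0; [apply: lipnorm_ge0|apply: mulr_ge0 => //; apply: lipnorm_ge0].
move=> e e0; have [s hs] := hF e e0.
have h1 := hs _ (isLip0_scale c lg); have h2 := hs _ lg.
have -> : phi (fun p => c * g p) - c * phi g =
  (phi (fun p => c * g p) - deltas_comb s (fun p => c * g p)) - c * (phi g - deltas_comb s g).
  have dc : deltas_comb s (fun p => c * g p) = c * deltas_comb s g.
    by rewrite /deltas_comb mulr_sumr; apply: eq_bigr => p _; rewrite mulrCA.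
  rewrite dc; ring.
apply: le_trans (ler_normB _ _) _; rewrite normrM mulrDr.
apply: lerD => //; rewrite mulrCA ler_wpM2l //.
Qed.

Lemma Free_nonLip phi g : Free phi -> ~ isLip0 g -> phi g = 0.
Proof. by move=> [h _]; apply: h. Qed.

Lemma lip0_zero g : isLip0 g -> lipnorm g = 0 -> forall p, g p = 0.
Proof.
move=> lg L0 p; have := isLip0_bound lg p 0; rewrite L0 mul0r.
by case: lg => -> _; rewrite subr0 normr_le0 => /eqP.
Qed.

Definition fset_ phi := [set `|phi g| | g in [set g : X -> RR^o | isLip0 g /\ lipnorm g <= 1]].

Lemma zero_Lip0 : isLip0 (fun _ : X => (0 : RR^o)).
Proof. by split => //; exists 0 => p q; rewrite subrr normr0 mul0r. Qed.

Lemma zero_lipnorm : lipnorm (fun _ : X => (0 : RR^o)) <= 1.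
Proof. by apply: lipnorm_le => // p q; rewrite subrr normr0 mul1r. Qed.

Lemma Free_has_sup phi : Free phi -> has_sup (fset_ phi).
Proof.
move=> [h0 hF]; split; first by exists (`|phi (fun _ => 0)|); exists (fun _ => 0) => //; split; [exact: zero_Lip0|exact: zero_lipnorm].
have [s hs] := hF 1 ltr01.
exists (\sum_(p <- s) `|p.1| * `|p.2| + 1) => r [g [lg Lg] <-].
have h := hs g lg.
have hc : `|deltas_comb s g| <= \sum_(p <- s) `|p.1| * `|p.2|.
  apply: le_trans (ler_norm_sum _ _ _) _; apply: ler_sum => p _; rewrite normrM ler_wpM2l //.
  have := isLip0_bound lg p.2 0; case: (lg) => -> _; rewrite !subr0 => /le_trans; apply.
  by rewrite ler_piMl.
have : `|phi g| <= `|phi g - deltas_comb s g| + `|deltas_comb s g|.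
  by rewrite -{1}(subrK (deltas_comb s g) (phi g)) ler_normD.
rewrite mul1r in h; lra.
Qed.

Lemma Free_bound phi g : Free phi -> isLip0 g -> `|phi g| <= freenorm phi * lipnorm g.
Proof.
move=> hphi lg; have := lipnorm_ge0 g; rewrite le_eqVlt => /orP [/eqP L0|L0].
  have e0 : phi g = 0.
    have -> : g = (fun p => 0 * g p) by apply: funext => p; rewrite mul0r (lip0_zero lg (esym L0)).
    by rewrite Free_hom // mul0r.
  by rewrite e0 normr0 -L0 mulr0.
set L := lipnorm g in L0 *.
have lg' := isLip0_scale L^-1 lg.
have Lg' : lipnorm (fun p => L^-1 * g p : RR^o) <= 1.
  apply: lipnorm_le => // p q; rewrite -mulrBr normrM gtr0_norm ?invr_gt0 //.
  by rewrite mul1r ler_pdivrMl //; have := isLip0_bound lg p q.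
have := sup_upper_bound (Free_has_sup hphi) (ex_intro2 _ _ _ (conj lg' Lg') erefl).
rewrite Free_hom // normrM gtr0_norm ?invr_gt0 //.
by rewrite ler_pdivrMl // mulrC.
Qed.

End FreeBasics.

Lemma invSn_gt0 (k : nat) : 0 < (k.+1%:R : RR)^-1.
Proof. by rewrite invr_gt0 ltr0Sn. Qed.

Section Lin.
Variables (X : normedModType RR) (Y : completeNormedModType RR) (f : X -> Y).
Hypothesis f0 : f 0 = 0.
Hypothesis f1 : forall p q, `|f p - f q| <= `|p - q|.
Implicit Types (phi : (X -> RR^o) -> RR) (g : X -> RR^o) (s : seq (RR * X)).

Lemma slope_le1 p q : `|slope f p q| <= 1.
Proof.
have [->|pq] := eqVneq p q; first by rewrite /slope !subrr scaler0 normr0.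
have ab0 : 0 < `|p - q| by rewrite normr_gt0 subr_eq0.
rewrite /slope normrZ normrV ?unitfE ?gt_eqF // normr_id ler_pdivrMl // mulr1 //.
Qed.

Lemma molF_le t : `|molF f t| <= cost t.
Proof.
apply: le_trans (ler_norm_sum _ _ _) _; apply: ler_sum => u _.
by rewrite normrZ ler_piMr // slope_le1.
Qed.

Lemma BND r E : 0 <= E -> (forall g, isLip0 g -> `|deltas_comb r g| <= E * lipnorm g) ->
  `|combF f r| <= E.
Proof.
move=> E0 hE; apply: le_eps => e e0.
have [t [_ [c h]]] := MD E0 hE e0.
by rewrite (h Y f f0); apply: le_trans (molF_le t) c.
Qed.

Lemma approx_diff phi e1 e2 s1 s2 : approx phi e1 s1 -> approx phi e2 s2 -> 0 <= e1 -> 0 <= e2 ->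
  `|combF f s1 - combF f s2| <= e1 + e2.
Proof.
move=> h1 h2 e10 e20.
have -> : combF f s1 - combF f s2 = combF f (s1 ++ scales (-1) s2).
  by rewrite combF_cat combF_scale scaleN1r.
apply: BND; first by rewrite addr_ge0.
move=> g lg; rewrite deltas_cat deltas_scale mulN1r.
have := h1 g lg; have := h2 g lg.
have : `|deltas_comb s1 g - deltas_comb s2 g| <= `|phi g - deltas_comb s1 g| + `|phi g - deltas_comb s2 g|.
  rewrite (distrC (phi g)); have := ler_distD (phi g) (deltas_comb s1 g) (deltas_comb s2 g).
  by rewrite distrC.
lra.
Qed.

Definition apx phi k := xget [::] [set s | approx phi k.+1%:R^-1 s].

Lemma apxP phi k : Free phi -> approx phi k.+1%:R^-1 (apx phi k).
Proof.
move=> [_ hF]; apply: (xgetPex [::] (P := [set s | approx phi k.+1%:R^-1 s])).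
by apply: hF; rewrite invr_gt0.
Qed.

Definition u_ phi k := combF f (apx phi k).
Definition Tf phi : Y := lim (u_ phi @ \oo).

Lemma u_cvg phi : Free phi -> cvg (u_ phi @ \oo).
Proof.
move=> hphi; apply: cauchy_cvg; apply: cauchy_exP => e e0.
have e20 : 0 < e / 2 by rewrite divr_gt0.
have [N hN] := archi_k e20.
exists (u_ phi N); exists N => // k /= hk.
rewrite -ball_normE /ball_ /=.
have := approx_diff (apxP N hphi) (apxP k hphi) (ltW (invSn_gt0 _)) (ltW (invSn_gt0 _)).
have := hN N (leqnn N); have := hN k hk.
rewrite /u_; move=> a b c; apply: le_lt_trans c _; move: a b; move: (k.+1%:R^-1) (N.+1%:R^-1) => z1 z2; lra.
Qed.

Lemma Mlem phi e s : Free phi -> 0 <= e -> approx phi e s -> `|Tf phi - combF f s| <= e.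
Proof.
move=> hphi e0 hs; apply: le_eps => d d0.
have d20 : 0 < d / 2 by rewrite divr_gt0.
have cv := u_cvg hphi.
have [N1 _ h1] := cvgr_dist_lt _ _ cv (d / 2) d20.
have [N2 hN2] := archi_k d20.
pose k := maxn N1 N2.
have := h1 k (leq_maxl _ _); have := hN2 k (leq_maxr _ _).
have := approx_diff (apxP k hphi) hs (ltW (invSn_gt0 _)) e0.
move=> a b c.
have : `|Tf phi - combF f s| <= `|Tf phi - u_ phi k| + `|u_ phi k - combF f s| by apply: ler_distD.

rewrite /Tf /u_ in a b c * => T.
apply: le_trans T _; apply: le_trans (lerD (ltW c) a) _.
move: b; move: (k.+1%:R^-1) => z; lra.
Qed.

Lemma small0Y (v : Y) K : 0 <= K -> (forall e, 0 < e -> `|v| <= e * K) -> v = 0.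
Proof. by move=> K0 h; apply/normr0_eq0; apply: (small0 K0) => e e0; rewrite normr_id; apply: h. Qed.

Lemma approx_mono phi e e' s : approx phi e s -> e <= e' -> approx phi e' s.
Proof. by move=> h ee g lg; apply: le_trans (h g lg) _; rewrite ler_wpM2r // lipnorm_ge0. Qed.

Lemma approx_lin phi psi a e1 e2 s1 s2 : approx phi e1 s1 -> approx psi e2 s2 ->
  approx (fun g => a * phi g + psi g) (`|a| * e1 + e2) (scales a s1 ++ s2).
Proof.
move=> h1 h2 g lg; rewrite deltas_cat deltas_scale.
have -> : a * phi g + psi g - (a * deltas_comb s1 g + deltas_comb s2 g) =
   a * (phi g - deltas_comb s1 g) + (psi g - deltas_comb s2 g) by ring.
apply: le_trans (ler_normD _ _) _; rewrite normrM mulrDl -mulrA.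
by apply: lerD; [apply: ler_wpM2l => //; exact: h1|exact: h2].
Qed.

Lemma Free_lin phi psi a : Free phi -> Free psi -> Free (fun g => a * phi g + psi g).
Proof.
move=> [n1 F1] [n2 F2]; split; first by move=> g ng; rewrite n1 // n2 // mulr0 addr0.
move=> e e0.
have a1 : 0 < `|a| + 1 by rewrite ltr_wpDl.
have e10 : 0 < e / (2 * (`|a| + 1)) by rewrite divr_gt0 // mulr_gt0.
have e20 : 0 < e / 2 by rewrite divr_gt0.
have [s1 h1] := F1 _ e10; have [s2 h2] := F2 _ e20.
exists (scales a s1 ++ s2); apply: approx_mono (approx_lin a h1 h2) _.
have : `|a| * (e / (2 * (`|a| + 1))) <= e / 2.
  have q : `|a| / (`|a| + 1) <= 1 by rewrite ler_pdivrMr // mul1r; lra.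
  have -> : `|a| * (e / (2 * (`|a| + 1))) = (e/2) * (`|a| / (`|a|+1)).
    by field; rewrite gt_eqF.
  by rewrite ler_piMr // ltW.
lra.
Qed.

Lemma approx_nc s : approx (nc s) 0 s.
Proof. by move=> g lg; rewrite /nc asboolT // subrr normr0 mul0r. Qed.

Lemma Tf_nc s : Tf (nc s) = combF f s.
Proof.
apply/eqP; rewrite -subr_eq0 -normr_le0; apply: Mlem => //; first exact: nc_free.
exact: approx_nc.
Qed.

Lemma Tf_lin : is_linear_on_Free Tf.
Proof.
move=> a phi psi hphi hpsi; set chi := fun g => _.
have hchi : Free chi by apply: Free_lin.
apply/eqP; rewrite -subr_eq0; apply/eqP.
apply: (@small0Y _ (2 * `|a| + 2)); first by rewrite addr_ge0 ?mulr_ge0.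
move=> e e0.
have [_ F1] := hphi; have [_ F2] := hpsi.
have [s1 h1] := F1 _ e0; have [s2 h2] := F2 _ e0.
have h := approx_lin a h1 h2.
have m0 := Mlem hchi (addr_ge0 (mulr_ge0 (normr_ge0 a) (ltW e0)) (ltW e0)) h.
have m1 := Mlem hphi (ltW e0) h1.
have m2 := Mlem hpsi (ltW e0) h2.
rewrite combF_cat combF_scale in m0.
have t1 := ler_distD (a *: combF f s1 + combF f s2) (Tf chi) (a *: Tf phi + Tf psi).
have e1 : a *: combF f s1 + combF f s2 - (a *: Tf phi + Tf psi) = a *: (combF f s1 - Tf phi) + (combF f s2 - Tf psi).
  by rewrite scalerBr opprD addrACA.
rewrite e1 in t1.
have t2 := ler_normD (a *: (combF f s1 - Tf phi)) (combF f s2 - Tf psi).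
rewrite normrZ distrC in t2; rewrite (distrC (combF f s2)) in t2.
have t3 : `|a| * `|Tf phi - combF f s1| <= `|a| * e by rewrite ler_wpM2l.
apply: le_trans t1 _.
move: m0 m2 t2 t3; move: (`|Tf chi - (a *: combF f s1 + combF f s2)|) (`|Tf psi - combF f s2|) (`|a| * `|Tf phi - combF f s1|) (`|a *: (combF f s1 - Tf phi) + (combF f s2 - Tf psi)|) => z0 z1 z2 z3.
nra.
Qed.

Lemma freenorm_ge0 phi : Free phi -> 0 <= freenorm phi.
Proof.
move=> hphi; apply: le_trans (sup_upper_bound (Free_has_sup hphi) _); first exact: (normr_ge0 (phi (fun _ => 0))).
by exists (fun _ => 0) => //; split; [exact: zero_Lip0|exact: zero_lipnorm].
Qed.

Lemma Tf_bound phi : Free phi -> `|Tf phi| <= freenorm phi.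
Proof.
move=> hphi; apply: le_eps => e e0.
have e20 : 0 < e / 2 by rewrite divr_gt0.
have [_ F] := hphi; have [s hs] := F _ e20.
have m := Mlem hphi (ltW e20) hs.
have b : `|combF f s| <= freenorm phi + e / 2.
  apply: BND; first by rewrite addr_ge0 ?freenorm_ge0 // ltW.
  move=> g lg; have := hs g lg; have := Free_bound hphi lg.
  have : `|deltas_comb s g| <= `|phi g - deltas_comb s g| + `|phi g|.
    by have := ler_distD (phi g) (deltas_comb s g) 0; rewrite !subr0 distrC.
  rewrite mulrDl; lra.
have : `|Tf phi| <= `|Tf phi - combF f s| + `|combF f s|.
  by rewrite -{1}(subrK (combF f s) (Tf phi)) ler_normD.
move: m b; move: (`|Tf phi - combF f s|) (`|combF f s|) (`|Tf phi|) => z1 z2 z3; lra.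
Qed.

End Lin.

Section TB0.
Variable V : normedModType RR.

Definition TB (A : set V) := forall e, 0 < e -> exists D : seq V,
  forall a, A a -> exists2 y, y \in D & `|a - y| < e.

Lemma ballE' (x y : V) e : ball x e y = (`|x - y| < e).
Proof. by rewrite -ball_normE. Qed.

Lemma compact_TB (K : set V) : compact K -> TB K.
Proof.
rewrite compact_cover => cK e e0.
have := cK V K (fun k => ball k e) (fun k _ => ball_open k e).
case.
  by move=> k Kk; exists k => //; apply: ballxx.
move=> D' _ hD; exists (enum_fset D') => a Ka.
have [y yD hy] := hD a Ka.
by exists y => //; rewrite ballE' in hy; rewrite distrC.
Qed.

End TB0.

Section TB.
Variable V : normedModType RR.


Lemma TB_sub (A B : set V) : A `<=` B -> TB B -> TB A.
Proof. by move=> AB hB e e0; have [D hD] := hB e e0; exists D => a /AB /hD. Qed.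

Lemma TB_approx (A : set V) : (forall e, 0 < e -> exists2 B, TB B & forall a, A a -> exists2 b, B b & `|a - b| < e) -> TB A.
Proof.
move=> h e e0; have e20 : 0 < e / 2 by rewrite divr_gt0.
have [B hB hAB] := h _ e20; have [D hD] := hB _ e20.
exists D => a /hAB [b /hD [y yD byl] abl]; exists y => //.
apply: le_lt_trans (ler_distD b a y) _; move: abl byl; move: (`|a - b|) (`|b - y|) => z1 z2; lra.
Qed.

Lemma TB_sum (A B : set V) : TB A -> TB B -> TB [set a + b | a in A & b in B].
Proof.
move=> hA hB e e0; have e20 : 0 < e / 2 by rewrite divr_gt0.
have [DA hDA] := hA _ e20; have [DB hDB] := hB _ e20.
exists [seq x + y | x <- DA, y <- DB] => _ [a Aa [b Bb <-]].
have [x xD ax] := hDA a Aa; have [y yD bY] := hDB b Bb.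
exists (x + y); first by apply/allpairsP; exists (x, y).
have -> : a + b - (x + y) = (a - x) + (b - y) by rewrite opprD addrACA.
apply: le_lt_trans (ler_normD _ _) _; move: ax bY; move: (`|a - x|) (`|b - y|) => z1 z2; lra.
Qed.

Lemma TB_seg (k0 : V) (M : RR) : TB [set c *: k0 | c in `[- M, M]].
Proof.
move=> e e0; have k1 : 0 < `|k0| + 1 by rewrite ltr_wpDl.
have d0 : 0 < e / (`|k0| + 1) by rewrite divr_gt0.
have [D hD] := compact_TB (@segment_compact RR (- M) M) d0.
exists (map (fun c => c *: k0) D) => _ [c Mc <-].
have [r rD cr] := hD c Mc; exists (r *: k0); first by apply: map_f.
rewrite -scalerBl normrZ.
apply: le_lt_trans (_ : `|c - r| * (`|k0| + 1) < e).
  by rewrite ler_wpM2l // lerDl.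
by rewrite -ltr_pdivlMr.
Qed.

Fixpoint Cset (k : seq V) (M : RR) : set V :=
  match k with
  | [::] => [set 0]
  | k0 :: k' => [set a + b | a in [set c *: k0 | c in `[- M, M]] & b in Cset k' M]
  end.

Lemma TB_Cset k M : TB (Cset k M).
Proof.
elim: k => [|k0 k IH] /=; last by apply: TB_sum => //; apply: TB_seg.
move=> e e0; exists [:: 0] => a ->; exists 0; by rewrite ?mem_seq1 // subrr normr0.
Qed.

Lemma Cset_mem k M (c : nat -> RR) : (forall i, (i < size k)%N -> `|c i| <= M) ->
  Cset k M (\sum_(i < size k) c i *: nth 0 k i).
Proof.
elim: k c => [|k0 k IH] c hc /=; first by rewrite big_ord0.
rewrite big_ord_recl /=.
exists (c 0%N *: k0); first exists (c 0%N) => //.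
  by have := hc 0%N isT; rewrite in_itv /= ler_norml => /andP [-> ->].
exists (\sum_(i < size k) c (bump 0 i) *: nth 0 k i) => //.
by apply: (IH (fun i => c i.+1)) => i hi; apply: hc.
Qed.

End TB.

Section TBcompact.
Variable V : completeNormedModType RR.

Lemma ultra_U (T : Type) (F : set_system T) (A B : set T) : UltraFilter F -> F (A `|` B) -> F A \/ F B.
Proof.
move=> UF FAB; have [FA|FnA] := in_ultra_setVsetC A UF; first by left.
right; apply: filterS (filterI FAB FnA) => x [[Ax|Bx] nAx] //.
Qed.

Lemma TB_compact (A : set V) : TB A -> compact (closure A).
Proof.
move=> hA; rewrite compact_ultra => F UF FA.
have PF : ProperFilter F by apply: ultra_proper.
have cF : cauchy F.
  apply: cauchy_exP => e e0.
  have e20 : 0 < e / 2 by rewrite divr_gt0.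
  have [D hD] := hA _ e20.
  have cov : closure A `<=` \big[setU/set0]_(y <- D) ball y e.
    move=> z Az; have [a [Aa za]] := Az _ (nbhsx_ballx z (e / 2) e20).
    have [y yD ay] := hD a Aa.
    have : ball y e z.
      rewrite ballE'; rewrite ballE' in za.
      have h1 : `|y - a| < e / 2 by rewrite distrC.
      have h2 : `|a - z| < e / 2 by rewrite distrC.
      apply: le_lt_trans (ler_distD a y z) _; move: h1 h2; move: (`|y - a|) (`|a - z|) => z1 z2; lra.
    move: yD; elim: D {hD} => // d D IH; rewrite inE big_cons => /orP [/eqP <- h|/IH h b]; [by left|by right; apply: h].
  have FU : F (\big[setU/set0]_(y <- D) ball y e) by apply: filterS cov FA.
  elim: D {hD cov} FU => [|d D IH]; first by rewrite big_nil => /filter_not_empty.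
  rewrite big_cons => /(ultra_U UF) [Fd|/IH //]; by exists d.
have cvF : cvg F by apply: cauchy_cvg.
exists (lim F); split => //.
rewrite (closure_id (closure A)).1; last exact: closed_closure.
move=> N hN; have FN : F N by apply: cvF.
exact: filter_ex (filterI FA FN).
Qed.

End TBcompact.

Section Mol.
Variables (X : normedModType RR).
Definition molseq (p q : X) := [:: (`|p - q|^-1, p); (- `|p - q|^-1, q)].
Definition mol (p q : X) := nc (molseq p q).

Lemma deltas_mol p q (g : X -> RR^o) : deltas_comb (molseq p q) g = `|p - q|^-1 * (g p - g q).
Proof. by rewrite /deltas_comb /molseq !big_cons big_nil /=; ring. Qed.

Lemma combF_mol (V : normedModType RR) (F : X -> V) p q : combF F (molseq p q) = slope F p q.
Proof. by rewrite /combF /molseq !big_cons big_nil /= addr0 /slope scalerBr scaleNr. Qed.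

Lemma mol_free p q : Free (mol p q).
Proof. exact: nc_free. Qed.

Lemma mol_norm p q : p != q -> freenorm (mol p q) <= 1.
Proof.
move=> pq; apply: ge_sup.
  exists (`|mol p q (fun _ => 0)|); exists (fun _ => 0) => //; split; [exact: zero_Lip0|exact: zero_lipnorm].
move=> _ [g [lg Lg] <-]; rewrite /mol /nc asboolT // deltas_mol.
have ab0 : 0 < `|p - q| by rewrite normr_gt0 subr_eq0.
rewrite normrM normrV ?unitfE ?gt_eqF // normr_id mulrC ler_pdivrMr // mul1r.
by apply: le_trans (isLip0_bound lg p q) _; rewrite ler_piMl.
Qed.

Lemma mol_ball p q : p != q -> @Free_ball X (mol p q).
Proof. by move=> pq; split; [exact: mol_free|exact: mol_norm]. Qed.
End Mol.

Section TfProps.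
Variables (X : normedModType RR) (Y : completeNormedModType RR) (f : X -> Y).
Hypothesis f0 : f 0 = 0.
Hypothesis f1 : forall p q, `|f p - f q| <= `|p - q|.

Lemma Tf_mol p q : Tf f (mol p q) = slope f p q.
Proof. by rewrite /mol Tf_nc // combF_mol. Qed.

Lemma Tf_ball phi : @Free_ball X phi -> `|Tf f phi| <= 1.
Proof. by move=> [hphi n1]; apply: le_trans (Tf_bound f0 f1 hphi) n1. Qed.

Lemma opnorm_Tf (x y : X) : x != y -> lipnorm f = 1 -> opnorm (Tf f) = 1.
Proof.
move=> xy L1.
have hE : has_sup [set `|Tf f phi| | phi in @Free_ball X].
  split.
    exists (`|Tf f (mol x y)|); exists (mol x y) => //; exact: mol_ball xy.
  by exists 1 => _ [phi hphi <-]; apply: Tf_ball.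
apply/eqP; rewrite eq_le; apply/andP; split.
  by apply: ge_sup; [by case: hE|] => _ [phi hphi <-]; apply: Tf_ball.
apply: le_eps => d d0.
have hL : has_sup (lipset f) by apply: (lip_has_sup (k := 1)) xy => p q; rewrite mul1r.
have [r [[p q] /= pq <-] hr] := sup_adherent d0 hL.
have : `|Tf f (mol p q)| <= opnorm (Tf f).
  change (`|Tf f (mol p q)| <= sup [set `|Tf f phi| | phi in @Free_ball X]).
  by apply: (sup_upper_bound hE); exists (mol p q) => //; exact: mol_ball pq.
rewrite Tf_mol /slope normrZ normrV ?unitfE ?normr_eq0 ?subr_eq0 // normr_id mulrC.
change (sup (lipset f)) with (lipnorm f) in hr; rewrite L1 in hr.
move: hr; move: (`|f p - f q| / `|p - q|) => z; lra.
Qed.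

Hypothesis hK : compact (closure [set slope f p.1 p.2 | p in [set p : X * X | p.1 != p.2]]).

Lemma Tf_compact : compact (closure [set Tf f phi | phi in @Free_ball X]).
Proof.
apply: TB_compact; apply: TB_approx => ep ep0.
have ep40 : 0 < ep / 4 by rewrite divr_gt0.
have [k hk] := compact_TB hK ep40.
exists (Cset k 2); first exact: TB_Cset.
move=> _ [phi [hphi n1] <-].
pose e := Num.min (1 / 2) (ep / 8).
have e0 : 0 < e by rewrite lt_min; apply/andP; split; rewrite divr_gt0.
have e1 : e <= 1 / 2 by rewrite ge_min lexx.
have e2 : e <= ep / 8 by rewrite ge_min lexx orbT.
have [_ hF] := hphi; have [s hs] := hF e e0.
have hN : forall g, isLip0 g -> `|deltas_comb s g| <= (1 + e) * lipnorm g.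
  move=> g lg; have := hs g lg; have := Free_bound hphi lg.
  have : `|deltas_comb s g| <= `|phi g - deltas_comb s g| + `|phi g|.
    by have := ler_distD (phi g) (deltas_comb s g) 0; rewrite !subr0 distrC.
  have : freenorm phi * lipnorm g <= lipnorm g by rewrite ler_piMl ?lipnorm_ge0.
  rewrite mulrDl mul1r; move: (freenorm phi * lipnorm g) (e * lipnorm g) (`|phi g|) (`|phi g - deltas_comb s g|) (`|deltas_comb s g|) => z1 z2 z3 z4 z5; lra.
have [t [gt [ct ht]]] := MD (ltW (ltr_wpDr (ltW e0) ltr01)) hN e0.
pose iu (u : RR * (X * X)) := xget 0%N [set i | (i < size k)%N /\ `|slope f u.2.1 u.2.2 - nth 0 k i| < ep / 4].
have iuP : forall u, u \in t -> (iu u < size k)%N /\ `|slope f u.2.1 u.2.2 - nth 0 k (iu u)| < ep / 4.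
  move=> u ut; apply: (xgetPex 0%N (P := [set i | (i < size k)%N /\ `|slope f u.2.1 u.2.2 - nth 0 k i| < ep / 4])).
  have Ku : closure [set slope f p.1 p.2 | p in [set p : X * X | p.1 != p.2]] (slope f u.2.1 u.2.2).
    by apply: subset_closure; exists u.2 => //; apply: gt.
  have [y yk hy] := hk _ Ku.
  exists (index y k); split; first by rewrite index_mem.
  by rewrite nth_index.
pose c i := \sum_(u <- t | iu u == i) u.1.
have cost2 : cost t <= 2 by lra.
have hc : forall i, (i < size k)%N -> `|c i| <= 2.
  move=> i _; apply: le_trans cost2; apply: le_trans (ler_norm_sum _ _ _) _.
  rewrite /cost big_mkcond /=; apply: ler_sum => u _; case: ifP => // _.
exists (\sum_(i < size k) c i *: nth 0 k i); first exact: Cset_mem.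
have regroup : \sum_(i < size k) c i *: nth 0 k i = \sum_(u <- t) u.1 *: nth 0 k (iu u).
  rewrite /c; under eq_bigr do rewrite scaler_suml big_mkcond /=.
  rewrite exchange_big /=; rewrite big_seq_cond [RHS]big_seq_cond; apply: eq_bigr => u /andP [ut _].
  have [il _] := iuP u ut.
  rewrite (bigD1 (Ordinal il)) //= eqxx big1 ?addr0 // => i; rewrite -val_eqE /= eq_sym => /negbTE ->; by [].
rewrite regroup.
have err : `|molF f t - \sum_(u <- t) u.1 *: nth 0 k (iu u)| <= cost t * (ep / 4).
  rewrite /molF -sumrB; apply: le_trans (ler_norm_sum _ _ _) _.
  rewrite /cost mulr_suml big_seq_cond [X in _ <= X]big_seq_cond; apply: ler_sum => u /andP [ut _].
  rewrite -scalerBr normrZ ler_wpM2l //; have [_ h] := iuP u ut; exact: ltW.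
have m := Mlem f0 f1 hphi (ltW e0) hs.
rewrite (ht Y f f0) in m.
have : `|Tf f phi - \sum_(u <- t) u.1 *: nth 0 k (iu u)| <= `|Tf f phi - molF f t| + `|molF f t - \sum_(u <- t) u.1 *: nth 0 k (iu u)|.
  by apply: ler_distD.
have : cost t * (ep / 4) <= 2 * (ep / 4) by rewrite ler_wpM2r // ltW.
move: err m; move: (cost t * (ep / 4)) (`|Tf f phi - molF f t|) (`|molF f t - \sum_(u <- t) u.1 *: nth 0 k (iu u)|) (`|Tf f phi - \sum_(u <- t) u.1 *: nth 0 k (iu u)|) => z1 z2 z3 z4.
lra.
Qed.

End TfProps.

Lemma slope_lip (X Y : normedModType RR) (F : X -> Y) c : 0 <= c ->
  (forall p q, p != q -> `|slope F p q| <= c) -> forall p q, `|F p - F q| <= c * `|p - q|.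
Proof.
move=> c0 h p q; have [->|pq] := eqVneq p q; first by rewrite !subrr !normr0 mulr0.
have ab0 : 0 < `|p - q| by rewrite normr_gt0 subr_eq0.
have := h p q pq; rewrite /slope normrZ normrV ?unitfE ?gt_eqF // normr_id mulrC.
by rewrite ler_pdivrMr.
Qed.

Lemma zero_nc (X : normedModType RR) : nc (X := X) [::] = (fun _ => 0).
Proof. by apply: funext => g; rewrite /nc /deltas_comb big_nil; case: ifP. Qed.

Section Sprops.
Variables (X : normedModType RR) (Y : normedModType RR) (S : ((X -> RR^o) -> RR) -> Y).
Hypothesis hS : is_compact_op S.

Lemma S_bdd : exists M, forall phi, Free_ball phi -> `|S phi| <= M.
Proof.
have [_ cS] := hS; have [M [_ hM]] := compact_bounded cS.
exists (M + 1) => phi bphi; apply: hM; first lra.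
by apply: subset_closure; exists phi.
Qed.

Lemma S_hs : has_sup [set `|S phi| | phi in @Free_ball X].
Proof.
have [M hM] := S_bdd; split.
  exists (`|S (fun _ => 0)|); exists (fun _ => 0) => //; split.
    by rewrite -zero_nc; apply: nc_free.
  apply: ge_sup; first by eexists; exists (fun _ => 0) => //; split; [exact: zero_Lip0|exact: zero_lipnorm].
  by move=> _ [g _ <-]; rewrite normr0.
by exists M => _ [phi hphi <-]; apply: hM.
Qed.

Lemma S_ball phi : Free_ball phi -> `|S phi| <= opnorm S.
Proof. by move=> hphi; apply: (sup_upper_bound S_hs); exists phi. Qed.

Lemma S_zero : S (fun _ => 0) = 0.
Proof.
have [hl _] := hS; have hz : Free (fun _ : X -> RR^o => 0 : RR) by rewrite -zero_nc; apply: nc_free.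
have := hl 1 _ _ hz hz.
have -> : (fun g : X -> RR^o => 1 * (0 : RR) + 0) = (fun _ => 0) by apply: funext => g; rewrite mul1r addr0.
rewrite scale1r => h; apply: (addrI (S (fun _ => 0))); by rewrite addr0 -h.
Qed.

Definition gS (p : X) : Y := S (nc [:: (1, p)]).

Lemma S_nc s : S (nc s) = combF gS s.
Proof.
have [hl _] := hS.
elim: s => [|[a p] s IH]; first by rewrite zero_nc S_zero /combF big_nil.
have -> : nc ((a, p) :: s) = (fun g => a * nc [:: (1, p)] g + nc s g).
  apply: funext => g; rewrite /nc; case: ifP => _; last by rewrite mulr0 addr0.
  by rewrite /deltas_comb !big_cons big_nil /= mul1r addr0.
rewrite hl; [|exact: nc_free|exact: nc_free].
rewrite IH. rewrite /combF big_cons. by [].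
Qed.

Lemma S_mol p q : slope gS p q = S (mol p q).
Proof. by rewrite /mol S_nc combF_mol. Qed.

End Sprops.

Section Psi.
Variables (X Z : normedModType RR) (F : X -> Z) (y : X).
Hypothesis F1 : forall p q, `|F p - F q| <= `|p - q|.
Definition psiF (p : X) : RR^o := `|F p - F y| - `|F 0 - F y|.

Lemma psiF_dist p q : `|psiF p - psiF q| <= `|F p - F q|.
Proof.
rewrite /psiF.
have -> : `|F p - F y| - `|F 0 - F y| - (`|F q - F y| - `|F 0 - F y|) = `|F p - F y| - `|F q - F y| by ring.
have := ler_dist_dist (F p - F y) (F q - F y).
have -> : F p - F y - (F q - F y) = F p - F q by rewrite opprB addrA subrK.
by [].
Qed.

Lemma psiF_Lip0 : isLip0 psiF.
Proof.
split; first by rewrite /psiF subrr.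
by exists 1 => p q; rewrite mul1r; apply: le_trans (psiF_dist p q) (F1 p q).
Qed.

Lemma psiF_norm : lipnorm psiF <= 1.
Proof. by apply: lipnorm_le => // p q; rewrite mul1r; apply: le_trans (psiF_dist p q) (F1 p q). Qed.

Lemma psiF_slope p q : slope psiF p q <= `|F p - F q| / `|p - q|.
Proof.
rewrite /slope [X in X <= _]mulrC; apply: ler_wpM2r; first by rewrite invr_ge0.
by apply: le_trans (ler_norm _) (psiF_dist p q).
Qed.

Lemma psiF_mol (x : X) : mol x y psiF = `|x - y|^-1 * `|F x - F y|.
Proof.
rewrite /mol /nc asboolT ?deltas_mol; last exact: psiF_Lip0.
congr (_ * _); rewrite /psiF subrr normr0; ring.
Qed.

End Psi.

Lemma neg_term (T : eqType) (t : seq T) (a B : T -> RR) : (forall u, 0 <= a u) ->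
  \sum_(u <- t) a u * B u < 0 -> exists2 u, u \in t & B u < 0.
Proof.
move=> a0 hs; have [//|nh] := pselect (exists2 u, u \in t & B u < 0).
have : 0 <= \sum_(u <- t) a u * B u.
  rewrite big_seq; apply: sumr_ge0 => u ut; apply: mulr_ge0 => //.
  by rewrite leNgt; apply/negP => Bu; apply: nh; exists u.
by rewrite leNgt hs.
Qed.

Section Main.
Variables (X Y : completeNormedModType RR) (eta : RR -> RR).
Hypothesis hBPB : BPBp_compact X Y eta.
Variable eps : RR.
Hypothesis heps : 0 < eps < 1.
Variable f : X -> Y.
Hypothesis hf : isLip0K f.
Hypothesis hf1 : lipnorm f = 1.
Variables (x y : X).
Hypothesis hxy : x != y.
Hypothesis hfxy : `|f x - f y| / `|x - y| > 1 - eta eps.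
Variable h : X -> Y.
Hypothesis hh : isLip0 h.
Hypothesis hh1 : lipnorm h = 1.
Hypothesis hhxy : `|h x - h y| / `|x - y| = 1.

Lemma f0 : f 0 = 0. Proof. by case: hf => [[]]. Qed.
Lemma f1 p q : `|f p - f q| <= `|p - q|.
Proof. by have := isLip0_bound hf.1 p q; rewrite hf1 mul1r. Qed.
Lemma h1 p q : `|h p - h q| <= `|p - q|.
Proof. by have := isLip0_bound hh p q; rewrite hh1 mul1r. Qed.
Lemma h0 : h 0 = 0. Proof. by case: hh. Qed.

Lemma Tcomp : is_compact_op (Tf f).
Proof. split; [exact: Tf_lin f0 f1|exact: Tf_compact f0 f1 hf.2]. Qed.

Lemma Tn1 : opnorm (Tf f) = 1.
Proof. have := @opnorm_Tf X Y f f0 f1 x y hxy hf1. exact. Qed.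

Lemma hw : Free (mol x y). Proof. exact: mol_free. Qed.

Lemma hw1 : freenorm (mol x y) = 1.
Proof.
apply/eqP; rewrite eq_le mol_norm //=.
have F1 : forall p q : X, `|id p - id q| <= `|p - q| by [].
have := sup_upper_bound (Free_has_sup hw) (ex_intro2 _ _ (psiF id y) (conj (psiF_Lip0 y F1) (psiF_norm y F1)) erefl).
rewrite psiF_mol //.
have ne : `|x - y| != 0 by rewrite normr_eq0 subr_eq0.
by rewrite mulVf // normr1.
Qed.

Lemma hTw : `|Tf f (mol x y)| > 1 - eta eps.
Proof.
rewrite Tf_mol; last exact: f1; last exact: f0.
rewrite /slope normrZ normrV ?unitfE ?normr_eq0 ?subr_eq0 // normr_id mulrC //.
Qed.

Section WithS.
Variables (S : ((X -> RR^o) -> RR) -> Y) (v : (X -> RR^o) -> RR).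
Hypotheses (hS : is_compact_op S) (hS1 : opnorm S = 1) (hv : Free v) (hv1 : freenorm v = 1)
  (hSv : `|S v| = 1) (hST : opnorm (fun phi => S phi - Tf f phi) < eps)
  (hvw : freenorm (Defs.fsub v (mol x y)) < eps).

Let g := gS S.

Lemma S_b1 phi : Free_ball phi -> `|S phi| <= 1.
Proof. by rewrite -hS1; apply: S_ball. Qed.

Lemma g_sl1 p q : p != q -> `|slope g p q| <= 1.
Proof. by move=> pq; rewrite S_mol //; apply: S_b1; apply: mol_ball. Qed.

Lemma g0 : g 0 = 0.
Proof.
rewrite /g /gS -(S_zero hS); congr S; apply: funext => g'; rewrite /nc.
case: ifP => // /asboolP [g'0 _].
by rewrite /deltas_comb big_cons big_nil /= g'0 mulr0 addr0.
Qed.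

Lemma g_lipc p q : `|g p - g q| <= 1 * `|p - q|.
Proof. by apply: slope_lip => // a b ab; apply: g_sl1. Qed.

Lemma g_Lip0 : isLip0 g.
Proof. by split; [exact: g0|exists 1; exact: g_lipc]. Qed.

Lemma g_lip1 : lipnorm g <= 1.
Proof. by apply: lipnorm_le => //; exact: g_lipc. Qed.

Lemma g_K : isLip0K g.
Proof.
split; first exact: g_Lip0.
have [_ cS] := hS.
apply: (subclosed_compact _ cS); first exact: closed_closure.
apply: closure_subset => _ [[p q] /= pq <-]; rewrite S_mol //; exists (mol p q) => //.
exact: mol_ball.
Qed.

Lemma ST_hs : has_sup [set `|S phi - Tf f phi| | phi in @Free_ball X].
Proof.
have [M hM] := S_bdd hS; split.
  by eexists; exists (mol x y) => //; exact: mol_ball.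
exists (M + 1) => _ [phi hphi <-]; apply: le_trans (ler_normB _ _) _.
apply: lerD; first exact: hM.
by have := @Tf_ball X Y f f0 f1 phi hphi.
Qed.

Lemma g_f : lipnorm (g \- f) < eps.
Proof.
set c := opnorm (fun phi => S phi - Tf f phi).
have hc : forall p q, p != q -> `|slope (g \- f) p q| <= c.
  move=> p q pq.
  have -> : slope (g \- f) p q = S (mol p q) - Tf f (mol p q).
    rewrite -S_mol // Tf_mol; [|exact: f0|exact: f1].
    by rewrite /slope -scalerBr; congr (_ *: _); rewrite !opprD !opprK addrACA.
  by apply: (sup_upper_bound ST_hs); exists (mol p q) => //; exact: mol_ball.
have c0 : 0 <= c by apply: le_trans (hc x y hxy); exact: normr_ge0.
apply: le_lt_trans hST; apply: lipnorm_le => //.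
exact: slope_lip.
Qed.


Lemma fsub_free : Free (Defs.fsub v (mol x y)).
Proof.
have -> : Defs.fsub v (mol x y) = (fun g' => -1 * mol x y g' + v g').
  by apply: funext => g'; rewrite /Defs.fsub mulN1r addrC.
by apply: Free_lin => //; exact: hw.
Qed.

Lemma pairs d : 0 < d -> exists p q : X, [/\ p != q, 1 - d < `|slope g p q| & 1 - eps < `|h p - h q| / `|p - q|].
Proof.
move=> d0.
have [eps0 eps1] := andP heps.
pose e0 := freenorm (Defs.fsub v (mol x y)).
have hvw' : e0 < eps := hvw.
have e00 : 0 <= e0 by apply: freenorm_ge0; exact: fsub_free.
set gam := 1 - e0 / eps.
have gam0 : 0 < gam by rewrite /gam subr_gt0 ltr_pdivrMr // mul1r.
set K := 1 + 3 / d + 3 / eps.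
have d3 : 0 < 3 / d by rewrite divr_gt0.
have ep3 : 0 < 3 / eps by rewrite divr_gt0.
have K0 : 0 < K by rewrite /K; lra.
set e := gam / (2 * K).
have e0' : 0 < e by rewrite divr_gt0 // mulr_gt0.
have eK : e * K = gam / 2 by rewrite /e; field; rewrite gt_eqF.
have [_ hF] := hv; have [s hs] := hF e e0'.
pose chi := fun g' : X -> RR^o => -1 * nc s g' + v g'.
have hchi : Free chi by apply: Free_lin => //; exact: nc_free.
have hz : Free (fun _ : X -> RR^o => 0 : RR) by rewrite -zero_nc; apply: nc_free.
pose psi := fun g' : X -> RR^o => e^-1 * chi g' + (fun _ : X -> RR^o => 0 : RR) g'.
have hpsi : Free psi by apply: Free_lin.
have npsi : freenorm psi <= 1.
  apply: ge_sup.
    by eexists; exists (fun _ => 0) => //; split; [exact: zero_Lip0|exact: zero_lipnorm].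
  move=> _ [g' [lg Lg] <-]; rewrite /psi /chi /nc asboolT // addr0 mulN1r addrC normrM.
  rewrite gtr0_norm ?invr_gt0 // ler_pdivrMl // mulr1.
  by apply: le_trans (hs g' lg) _; rewrite ler_piMr // ltW.
have [hl _] := hS.
have Sv : S v = e *: S psi + S (nc s).
  rewrite -hl //; last exact: nc_free.
  congr S; apply: funext => g'; rewrite /psi /chi; field; exact: lt0r_neq0.
have Sb : 1 - e <= `|combF g s|.
  rewrite -S_nc //.
  have : `|S v| <= e * `|S psi| + `|S (nc s)| by rewrite Sv; apply: le_trans (ler_normD _ _) _; rewrite normrZ gtr0_norm.
  have : `|S psi| <= 1 by apply: S_b1.
  rewrite hSv; move: (`|S psi|) (`|S (nc s)|) => z1 z2; nra.
have hN : forall g', isLip0 g' -> `|deltas_comb s g'| <= (1 + e) * lipnorm g'.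
  move=> g' lg; have := hs g' lg; have := Free_bound hv lg; rewrite hv1 mul1r.
  have : `|deltas_comb s g'| <= `|v g' - deltas_comb s g'| + `|v g'|.
    by have := ler_distD (v g') (deltas_comb s g') 0; rewrite !subr0 distrC.
  rewrite mulrDl mul1r; move: (lipnorm g') (e * lipnorm g') (`|v g'|) (`|v g' - deltas_comb s g'|) (`|deltas_comb s g'|) => z1 z2 z3 z4 z5; lra.
have [t [gt [ct ht]]] := MD (ltW (ltr_wpDr (ltW e0') ltr01)) hN e0'.
have hps := psiF_Lip0 y h1.
have hpn := psiF_norm y h1.
have wps : mol x y (psiF h y) = 1 by rewrite psiF_mol; [rewrite mulrC|exact: h1].
have vps : 1 - e0 <= v (psiF h y).
  have := sup_upper_bound (Free_has_sup fsub_free) (ex_intro2 _ _ (psiF h y) (conj hps hpn) erefl).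
  rewrite /Defs.fsub wps => hh'.
  have hh2 : `|v (psiF h y) - 1| <= e0 by exact: hh'.
  by move: hh2; rewrite ler_norml => /andP [a b]; lra.
have cps : 1 - e0 - e <= combF (psiF h y) s.
  have := hs _ hps; have : e * lipnorm (psiF h y) <= e by rewrite ler_piMr // ltW.
  have -> : combF (psiF h y) s = deltas_comb s (psiF h y) by [].
  have := ler_norm (v (psiF h y) - deltas_comb s (psiF h y)).
  move: vps; move: (v (psiF h y)) (deltas_comb s (psiF h y)) (e * lipnorm (psiF h y)) (`|v (psiF h y) - deltas_comb s (psiF h y)|) => z1 z2 z3 z4; lra.
have psi0 : psiF h y 0 = 0 by case: hps.
rewrite (ht _ _ psi0) in cps.
rewrite (ht _ _ g0) in Sb.
pose a (u : RR * (X * X)) : RR := `|u.1|.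
pose ug (u : RR * (X * X)) : RR := `|slope g u.2.1 u.2.2|.
pose th (u : RR * (X * X)) : RR := `|h u.2.1 - h u.2.2| / `|u.2.1 - u.2.2|.
have ug1 : forall u, u \in t -> ug u <= 1 by move=> u /gt; apply: g_sl1.
have th1 : forall u, u \in t -> th u <= 1.
  move=> u /gt pq; have ab0 : 0 < `|u.2.1 - u.2.2| by rewrite normr_gt0 subr_eq0.
  by rewrite /th ler_pdivrMr // mul1r h1.
have Sa1 : 1 - e <= \sum_(u <- t) a u * ug u.
  apply: le_trans Sb _; rewrite /molF; apply: le_trans (ler_norm_sum _ _ _) _; apply: ler_sum => u _.
  have := normrZ u.1 (slope g u.2.1 u.2.2). move=> ->. by [].
have Sa2 : 1 - e0 - e <= \sum_(u <- t) a u * th u.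
  apply: le_trans cps _; rewrite /molF; apply: ler_sum => u _.
  apply: le_trans (ler_norm _) _.
  have sl : `|slope (psiF h y) u.2.1 u.2.2| <= th u.
    rewrite /slope /th normrZ ger0_norm ?invr_ge0 // mulrC.
    by apply: ler_wpM2r; [rewrite invr_ge0|apply: psiF_dist].
  change (`|u.1 * slope (psiF h y) u.2.1 u.2.2| <= a u * th u).
  by rewrite normrM /a; apply: ler_wpM2l.
have cst1 : 1 - e <= cost t.
  apply: le_trans Sa1 _; rewrite /cost big_seq [X in _ <= X]big_seq; apply: ler_sum => u ut.
  by rewrite /a ler_piMr // ug1.
have cst2 : cost t <= 1 + 2 * e by move: ct; lra.
pose B (u : RR * (X * X)) : RR := (1 - ug u) / d + (1 - th u) / eps - 1.
have SB : \sum_(u <- t) a u * B u = (cost t - \sum_(u <- t) a u * ug u) / d + (cost t - \sum_(u <- t) a u * th u) / eps - cost t.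
  transitivity (\sum_(u <- t) ((a u - a u * ug u) / d + (a u - a u * th u) / eps - a u)).
    apply: eq_bigr => u _; rewrite /B; field.
    by apply/andP; split; apply: lt0r_neq0.
  by rewrite sumrB big_split /= -!mulr_suml !sumrB.
have SBn : \sum_(u <- t) a u * B u < 0.
  rewrite SB.
  have A1 : (cost t - \sum_(u <- t) a u * ug u) / d <= e * (3 / d).
    have -> : e * (3 / d) = (3 * e) / d by ring.
    by apply: ler_wpM2r; [rewrite invr_ge0 ltW|lra].
  have A2 : (cost t - \sum_(u <- t) a u * th u) / eps <= e * (3 / eps) + e0 / eps.
    have -> : e * (3 / eps) + e0 / eps = (3 * e + e0) / eps by ring.
    by apply: ler_wpM2r; [rewrite invr_ge0 ltW|lra].
  have eK' : e * K = e + e * (3 / d) + e * (3 / eps) by rewrite /K; ring.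
  rewrite eK' in eK; move: eK gam0; rewrite /gam => eK gam0.
  move: A1 A2 eK gam0 cst1; move: (e * (3 / d)) (e * (3 / eps)) (e0 / eps) => z1 z2 z3; lra.
have [u ut Bu] := neg_term (fun u => normr_ge0 u.1) SBn.
have ug1' := ug1 u ut; have th1' := th1 u ut.
have t1 : 0 <= (1 - ug u) / d by apply: divr_ge0; [rewrite subr_ge0|apply: ltW].
have t2 : 0 <= (1 - th u) / eps by apply: divr_ge0; [rewrite subr_ge0|apply: ltW].
exists u.2.1, u.2.2; split; first exact: gt.
  have : (1 - ug u) / d < 1 by rewrite /B in Bu; lra.
  by rewrite ltr_pdivrMr // mul1r /ug; lra.
have : (1 - th u) / eps < 1 by rewrite /B in Bu; lra.
by rewrite ltr_pdivrMr // mul1r /th; lra.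
Qed.

Lemma g_norm1 : lipnorm g = 1.
Proof.
apply/eqP; rewrite eq_le g_lip1 /=.
apply: le_eps => d d0.
have [p [q [pq sl _]]] := pairs d0.
have := lipnorm_slope_le g_Lip0 pq; move: sl; move: (`|slope g p q|) => z; lra.
Qed.

Lemma seqs : exists (z : Y) (vv ww : nat -> X), [/\ `|z| = 1, (forall n, vv n != ww n),
  (forall n, 1 - eps < `|h (vv n) - h (ww n)| / `|vv n - ww n|) &
  (fun n => slope g (vv n) (ww n)) @ \oo --> z].
Proof.
pose Pk (k : nat) := [set pq : X * X | [/\ pq.1 != pq.2, 1 - k.+1%:R^-1 < `|slope g pq.1 pq.2| & 1 - eps < `|h pq.1 - h pq.2| / `|pq.1 - pq.2|]].
pose P k := xget (x, y) (Pk k).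
have PP : forall k, Pk k (P k).
  move=> k; apply: xgetPex; have [p [q hpq]] := pairs (invSn_gt0 k); by exists (p, q).
pose yk k := slope g (P k).1 (P k).2.
have yk1 : forall k, `|yk k| <= 1 by move=> k; have [pq _ _] := PP k; apply: g_sl1.
have ykl : forall k, 1 - k.+1%:R^-1 < `|yk k| by move=> k; have [_ a _] := PP k.
have [_ cS] := hS.
have ykK : forall k, closure [set S phi | phi in @Free_ball X] (yk k).
  move=> k; apply: subset_closure; have [pq _ _] := PP k.
  by rewrite /yk S_mol //; exists (mol (P k).1 (P k).2) => //; apply: mol_ball.
have hF : (yk @ \oo) (closure [set S phi | phi in @Free_ball X]) by exists 0%N => // k _; exact: ykK.
have [z [Kz cz]] := cS _ _ hF.
have near_z : forall m, exists k, (m <= k)%N /\ `|z - yk k| < m.+1%:R^-1.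
  move=> m.
  have A : (yk @ \oo) (yk @` [set k | (m <= k)%N]) by exists m => // k hk; exists k.
  have B : nbhs z (ball z m.+1%:R^-1) by apply: nbhsx_ballx; exact: invSn_gt0.
  have [_ [[k hk <-] bk]] := cz _ _ A B.
  by exists k; split => //; rewrite -ball_normE in bk.
pose Km m := xget 0%N [set k | (m <= k)%N /\ `|z - yk k| < m.+1%:R^-1].
have KP : forall m, (m <= Km m)%N /\ `|z - yk (Km m)| < m.+1%:R^-1.
  by move=> m; exact: (xgetPex 0%N (near_z m)).
exists z, (fun m => (P (Km m)).1), (fun m => (P (Km m)).2); split.
- apply/eqP; rewrite eq_le; apply/andP; split.
    apply: le_eps => d d0; have [N hN] := archi_k d0; have [_ hk] := KP N.
    have := hN N (leqnn N); have := yk1 (Km N).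
    have := ler_distD (yk (Km N)) z 0; rewrite !subr0.
    move: hk; move: (N.+1%:R^-1) (`|yk (Km N)|) (`|z - yk (Km N)|) (`|yk (Km N) - 0|) => a1 a2 a3 a4; lra.
  apply: le_eps => d d0.
  have d20 : 0 < d / 2 by rewrite divr_gt0.
  have [N hN] := archi_k d20; have [kN hk] := KP N.
  have := ykl (Km N); have := hN (Km N) kN; have := hN N (leqnn N).
  have := ler_distD z (yk (Km N)) 0; rewrite !subr0 (distrC (yk (Km N)) z).
  move: hk; move: (N.+1%:R^-1) ((Km N).+1%:R^-1) (`|yk (Km N)|) (`|z - yk (Km N)|) (`|z|) => a1 a2 a3 a4 a5; lra.
- by move=> n; have [pq _ _] := PP (Km n).
- by move=> n; have [_ _ hh'] := PP (Km n).
- apply/cvgrPdist_lt => ep ep0; have [N hN] := archi_k ep0.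
  exists N => // m hm /=; have [_ hk] := KP m; exact: lt_trans hk (hN m hm).
Qed.

Lemma withS_concl : exists (g : X -> Y) (z : Y) (v w : nat -> X),
    isLip0K g /\ lipnorm g = 1 /\ `|z| = 1 /\
    (forall n, v n != w n) /\
    lipnorm (g \- f) < eps /\
    (forall n, `|h (v n) - h (w n)| / `|v n - w n| > 1 - eps) /\
    (fun n => slope g (v n) (w n)) @ \oo --> z.
Proof.
have [z [vv [ww [z1 vw hv' cv]]]] := seqs.
exists g, z, vv, ww; split; first exact: g_K.
split; first exact: g_norm1.
split => //; split => //; split; first exact: g_f.
by split.
Qed.

End WithS.

Lemma main_concl : exists (g : X -> Y) (z : Y) (v w : nat -> X),
    isLip0K g /\ lipnorm g = 1 /\ `|z| = 1 /\
    (forall n, v n != w n) /\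
    lipnorm (g \- f) < eps /\
    (forall n, `|h (v n) - h (w n)| / `|v n - w n| > 1 - eps) /\
    (fun n => slope g (v n) (w n)) @ \oo --> z.
Proof.
have [S [v [hS [hS1 [hv [hv1 [hSv [hST hvw]]]]]]]] := hBPB heps Tcomp Tn1 hw hw1 hTw.
exact: (withS_concl hS hS1 hv hv1 hSv hST hvw).
Qed.
End Main.



Theorem lemma4p2 (X Y : completeNormedModType RR) (eta : RR -> RR)
  (eta_pos : forall e : RR, 0 < e < 1 -> 0 < eta e)
  (hBPB : BPBp_compact X Y eta)
  (eps : RR) (heps : 0 < eps < 1)
  (f : X -> Y) (hf : isLip0K f) (hf1 : lipnorm f = 1)
  (x y : X) (hxy : x != y)
  (hfxy : `|f x - f y| / `|x - y| > 1 - eta eps) :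
  forall h : X -> Y, isLip0 h -> lipnorm h = 1 -> `|h x - h y| / `|x - y| = 1 ->
  exists (g : X -> Y) (z : Y) (v w : nat -> X),
    isLip0K g /\ lipnorm g = 1 /\ `|z| = 1 /\
    (forall n, v n != w n) /\
    lipnorm (g \- f) < eps /\
    (forall n, `|h (v n) - h (w n)| / `|v n - w n| > 1 - eps) /\
    (fun n => slope g (v n) (w n)) @ \oo --> z.
Proof.
move=> h hh hh1 hhxy; exact: (main_concl hBPB heps hf hf1 hxy hfxy hh hh1 hhxy).
Qed.
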